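(* Let $P,Q\in\mathbb P_d$ and $R=\gamma^{\mathrm{AI}}_{P^{-1}Q^{-1}}(t)$ for some $t\in[0,1]$. Then $\operatorname{F}_R(P,Q)=\operatorname{F}^{\mathrm M}(P,Q)$.
   Context: $\mathbb P_d$ is the set of $d\times d$ complex positive definite matrices; $A\#B:=A^{1/2}(A^{-1/2}BA^{-1/2})^{1/2}A^{1/2}$. The affine-invariant geodesic between $A,B\in\mathbb P_d$ is $\gamma^{\mathrm{AI}}_{AB}(t):=A^{1/2}(A^{-1/2}BA^{-1/2})^tA^{1/2}$, $t\in[0,1]$; thus $\gamma^{\mathrm{AI}}_{P^{-1}Q^{-1}}(t)=P^{-1/2}(P^{1/2}Q^{-1}P^{1/2})^tP^{-1/2}$. The generalized fidelity is $\operatorname{F}_R(P,Q):=\operatorname{Tr}\big[\sqrt{R^{1/2}PR^{1/2}}\,R^{-1}\sqrt{R^{1/2}QR^{1/2}}\big]$, and the Matsumoto fidelity is $\operatorname{F}^{\mathrm M}(P,Q):=\operatorname{Tr}[P\#Q]$. *)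

(* Defs.v *)
From HB Require Import structures.
From mathcomp Require Import all_boot all_order all_algebra.
From mathcomp Require Import complex.
From mathcomp Require Import reals exp.
Set Implicit Arguments. Unset Strict Implicit. Unset Printing Implicit Defensive.
Import Order.TTheory GRing.Theory Num.Theory.
Local Open Scope ring_scope.
Local Open Scope sesquilinear_scope.

Section Defs.
Variable R : realType.
Local Notation C := (R[i]).

Definition adjmx (m n : nat) (A : 'M[C]_(m, n)) : 'M[C]_(n, m) := A ^t*.

Definition posdefmx (d : nat) (P : 'M[C]_d) : Prop :=
  P \is hermsymmx /\
  forall v : 'rV[C]_d, v != 0 -> 0 < (v *m P *m v ^t*) 0 0.

(* Real power A^t of a (positive definite) matrix via the spectral theorem:
   A = U^{-1} diag(lambda) U with U unitary, A^t := U^{-1} diag(lambda^t) U. *)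
Definition mxpowR (d : nat) (A : 'M[C]_d) (t : R) : 'M[C]_d :=
  invmx (spectralmx A)
  *m diag_mx (map_mx (fun z : C => ((complex.Re z) `^ t)%:C%C) (spectral_diag A))
  *m spectralmx A.

Definition mxsqrt (d : nat) (A : 'M[C]_d) : 'M[C]_d :=
  invmx (spectralmx A)
  *m diag_mx (map_mx (fun z : C => (Num.sqrt (complex.Re z))%:C%C) (spectral_diag A))
  *m spectralmx A.

Definition mxisqrt (d : nat) (A : 'M[C]_d) : 'M[C]_d := invmx (mxsqrt A).

Definition mxgeomean (d : nat) (A B : 'M[C]_d) : 'M[C]_d :=
  mxsqrt A *m mxsqrt (mxisqrt A *m B *m mxisqrt A) *m mxsqrt A.

Definition geodesicAI (d : nat) (A B : 'M[C]_d) (t : R) : 'M[C]_d :=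
  mxsqrt A *m mxpowR (mxisqrt A *m B *m mxisqrt A) t *m mxsqrt A.

Definition genFidelity (d : nat) (Rm P Q : 'M[C]_d) : C :=
  \tr (mxsqrt (mxsqrt Rm *m P *m mxsqrt Rm) *m invmx Rm
       *m mxsqrt (mxsqrt Rm *m Q *m mxsqrt Rm)).

Definition matsumotoFidelity (d : nat) (P Q : 'M[C]_d) : C :=
  \tr (mxgeomean P Q).

End Defs.

(* Main.v *)
Set Warnings "-notation-overridden,-ambiguous-paths".
Require Import Defs.
From HB Require Import structures.
From mathcomp Require Import all_boot all_order all_algebra.
From mathcomp Require Import complex.
From mathcomp Require Import reals exp.
From mathcomp Require Import ring.
Set Implicit Arguments. Unset Strict Implicit. Unset Printing Implicit Defensive.
Import Order.TTheory GRing.Theory Num.Theory.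
Local Open Scope ring_scope.
Local Open Scope sesquilinear_scope.

Section Aux.
Variable R : realType.
Variable d : nat.
Local Notation C := (R[i]).
Local Notation M := ('M[C]_d).

Lemma adjM m n p (A : 'M[C]_(m, n)) (B : 'M[C]_(n, p)) : (A *m B)^t* = B^t* *m A^t*.
Proof. by rewrite trmx_mul map_mxM. Qed.

Lemma adjK m n (A : 'M[C]_(m, n)) : A^t* ^t* = A.
Proof. exact: trmxCK. Qed.

Lemma unitary_adjmul (V : M) : V \is unitarymx -> V^t* *m V = 1%:M.
Proof. by move=> hV; have := mulmxKtV (1%:M) hV erefl; rewrite mul1mx. Qed.

Lemma unitary_muladj (V : M) : V \is unitarymx -> V *m V^t* = 1%:M.
Proof. by move/unitarymxP. Qed.

Definition DF (V : M) (r : 'I_d -> R) : M :=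
  V^t* *m diag_mx (\row_i ((r i)%:C)%C) *m V.

Lemma DF_ext (V : M) (r s : 'I_d -> R) : (forall i, r i = s i) -> DF V r = DF V s.
Proof.
move=> h; rewrite /DF.
suff -> : \row_i ((r i)%:C)%C = \row_i ((s i)%:C)%C :> 'rV[C]_d by [].
by apply/matrixP=> i j; rewrite !mxE h.
Qed.

Lemma DF_mul (V : M) (r s : 'I_d -> R) : V \is unitarymx ->
  DF V r *m DF V s = DF V (fun i => r i * s i).
Proof.
move=> hV; rewrite /DF !mulmxA.
rewrite (mulmxtVK _ hV) -[_ *m diag_mx _ *m diag_mx _]mulmxA mulmx_diag.
suff -> : \row_j ((\row_i ((r i)%:C)%C) 0 j * (\row_i ((s i)%:C)%C) 0 j)
  = \row_i ((r i * s i)%:C)%C :> 'rV[C]_d by [].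
by apply/matrixP=> i j; rewrite !mxE -rmorphM.
Qed.

Lemma DF_one (V : M) : V \is unitarymx -> DF V (fun _ => 1) = 1%:M.
Proof.
move=> hV; rewrite /DF.
have -> : diag_mx (\row_i ((1:R)%:C)%C) = 1%:M :> M.
  by apply/matrixP=> i j; rewrite !mxE.
by rewrite mulmx1 unitary_adjmul.
Qed.

Lemma diag_adj (r : 'I_d -> R) :
  (diag_mx (\row_i ((r i)%:C)%C) : M)^t* = diag_mx (\row_i ((r i)%:C)%C).
Proof.
apply/matrixP=> i j; rewrite !mxE.
case: (eqVneq i j) => [->|ne].
  by rewrite !mulr1n; exact: conjc_real.
by rewrite !mulr0n conjC0.
Qed.

Lemma DF_adj (V : M) (r : 'I_d -> R) : (DF V r)^t* = DF V r.
Proof. by rewrite /DF !adjM adjK diag_adj mulmxA. Qed.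

Lemma DF_unit (V : M) (r : 'I_d -> R) : V \is unitarymx -> (forall i, r i != 0) ->
  DF V r \in unitmx /\ invmx (DF V r) = DF V (fun i => (r i)^-1).
Proof.
move=> hV hr.
have h : DF V r *m DF V (fun i => (r i)^-1) = 1%:M.
  by rewrite (DF_mul _ _ hV) -(DF_one hV); apply: DF_ext => i; rewrite mulfV.
have [hu _] := mulmx1_unit h; split => //.
by rewrite -[RHS](mulKmx hu) h mulmx1.
Qed.

Lemma fcE (f : C -> C) (A V : M) (a : 'rV[C]_d) : V \is unitarymx ->
  A = V^t* *m diag_mx a *m V ->
  invmx (spectralmx A) *m diag_mx (map_mx f (spectral_diag A)) *m spectralmx A
  = V^t* *m diag_mx (map_mx f a) *m V.
Proof.
move=> hV eA.
have nA : A \is normalmx.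
  by apply/orthomx_spectral_subproof; exists (V, a) => //=; rewrite (invmx_unitary hV).
have hU := spectral_unitarymx A.
set U := spectralmx A in hU *; set e := spectral_diag A.
have eA' : A = U^t* *m diag_mx e *m U.
  by rewrite -(invmx_unitary hU); apply/orthomx_spectralP.
have key : diag_mx e *m (U *m V^t*) = (U *m V^t*) *m diag_mx a.
  have := congr1 (fun X => U *m X *m V^t*) (etrans (esym eA') eA) => /=.
  rewrite !mulmxA (unitary_muladj hU) mul1mx (mulmxtVK _ hV) => h.
  exact: h.
have key2 : diag_mx (map_mx f e) *m (U *m V^t*) = (U *m V^t*) *m diag_mx (map_mx f a).
  move: (U *m V^t*) key => W key.
  apply/matrixP=> i j; move/matrixP: key => /(_ i j).
  rewrite !mul_diag_mx !mul_mx_diag !mxE.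
  have [->|nw] := eqVneq (W i j) 0; first by move=> _; rewrite mulr0 mul0r.
  by rewrite [W i j * _]mulrC [W i j * _]mulrC => /(mulIf nw) ->.
rewrite (invmx_unitary hU).
transitivity (U^t* *m (diag_mx (map_mx f e) *m (U *m V^t*)) *m V).
  by rewrite !mulmxA (mulmxKtV _ hV).
by rewrite key2 !mulmxA (unitary_adjmul hU) mul1mx.
Qed.

Lemma mxsqrt_DF (V : M) (r : 'I_d -> R) : V \is unitarymx ->
  mxsqrt (DF V r) = DF V (fun i => Num.sqrt (r i)).
Proof.
move=> hV; rewrite /mxsqrt (@fcE _ (DF V r) V (\row_i ((r i)%:C)%C) hV erefl).
rewrite /DF; apply: (congr1 (fun D => V^t* *m diag_mx D *m V)).
by apply/matrixP=> i j; rewrite !mxE.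
Qed.

Lemma mxpowR_DF (V : M) (r : 'I_d -> R) (t : R) : V \is unitarymx ->
  mxpowR (DF V r) t = DF V (fun i => (r i) `^ t).
Proof.
move=> hV; rewrite /mxpowR (@fcE _ (DF V r) V (\row_i ((r i)%:C)%C) hV erefl).
rewrite /DF; apply: (congr1 (fun D => V^t* *m diag_mx D *m V)).
by apply/matrixP=> i j; rewrite !mxE.
Qed.

Lemma hermE (A : M) : (A \is hermsymmx) = (A^t* == A).
Proof.
apply/is_hermitianmxP/eqP; rewrite expr0 scale1r => h; exact/esym.
Qed.

Lemma gram_gt0 (B : M) (v : 'rV[C]_d) : B^t* \in unitmx -> v != 0 ->
  0 < (v *m (B^t* *m B) *m v^t*) 0 0.
Proof.
move=> hB hv.
have -> : v *m (B^t* *m B) *m v^t* = (v *m B^t*) *m (v *m B^t*)^t*.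
  by rewrite adjM adjK !mulmxA.
rewrite -dotmxE dnorm_gt0; apply: contra hv => /eqP h.
by rewrite -[v](mulmxK hB) h mul0mx.
Qed.

Lemma pd_cong (A T : M) : posdefmx A -> T^t* = T -> T \in unitmx ->
  posdefmx (T *m A *m T).
Proof.
move=> [hA pA] hT uT; split.
  by rewrite hermE !adjM hT; move: hA; rewrite hermE => /eqP ->; rewrite mulmxA.
move=> v hv.
have -> : v *m (T *m A *m T) *m v^t* = (v *m T) *m A *m (v *m T)^t*.
  by rewrite adjM hT !mulmxA.
apply: pA; apply: contra hv => /eqP h.
by rewrite -[v](mulmxK uT) h mul0mx.
Qed.

Lemma DF_pd (V : M) (r : 'I_d -> R) : V \is unitarymx -> (forall i, 0 < r i) -> posdefmx (DF V r).
Proof.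
move=> hV hr; split; first by rewrite hermE DF_adj.
move=> v hv.
have -> : DF V r = (DF V (fun i => Num.sqrt (r i)))^t* *m DF V (fun i => Num.sqrt (r i)).
  rewrite DF_adj (DF_mul _ _ hV); apply: DF_ext => i.
  by rewrite -expr2 sqr_sqrtr // ltW.
apply: gram_gt0 hv; rewrite DF_adj.
have hu : forall i, Num.sqrt (r i) != 0 by move=> i; rewrite gt_eqF // sqrtr_gt0.
by have [-> _] := DF_unit hV hu.
Qed.

Lemma quad_delta (D : 'rV[C]_d) (i : 'I_d) :
  let e := (delta_mx 0 i : 'rV[C]_d) in (e *m diag_mx D *m e^t*) 0 0 = D 0 i.
Proof.
move=> e; rewrite mul_mx_diag !mxE (bigD1 i) //= big1 => [|j nj]; rewrite !mxE.
  by rewrite !eqxx /= conjC1 mul1r mulr1 addr0.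
by rewrite (negbTE nj) /= !mul0r.
Qed.

Lemma pd_DF (A : M) : posdefmx A ->
  exists V (r : 'I_d -> R), [/\ V \is unitarymx, forall i, 0 < r i & A = DF V r].
Proof.
move=> [hA pA].
have nA := hermitian_normalmx hA.
have hU := spectral_unitarymx A.
set U := spectralmx A in hU *; set e := spectral_diag A.
have eA : A = U^t* *m diag_mx e *m U.
  by rewrite -(invmx_unitary hU); apply/orthomx_spectralP.
have he : forall i, 0 < e 0 i.
  move=> i; pose v := (delta_mx 0 i : 'rV[C]_d).
  have hv : v *m U != 0.
    apply/eqP => h; have := congr1 (fun X => X *m U^t*) h.
    rewrite /= (mulmxtVK _ hU) mul0mx => /matrixP/(_ 0 i).
    by rewrite !mxE !eqxx /= => /eqP; rewrite oner_eq0.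
  have := pA _ hv.
  by rewrite eA adjM !mulmxA !(mulmxtVK _ hU) quad_delta.
exists U, (fun i => complex.Re (e 0 i)); split => //.
  by move=> i; move: (e 0 i) (he i) => [a b]; rewrite ltcE /= => /andP[_ ->].
rewrite {1}eA /DF; apply: (congr1 (fun D => U^t* *m diag_mx D *m U)).
apply/matrixP=> k i; rewrite ord1 mxE.
by move: (e 0 i) (he i) => [a b]; rewrite ltcE /= => /andP[/eqP -> _].
Qed.

Lemma pd_unit (A : M) : posdefmx A -> A \in unitmx.
Proof.
case/pd_DF=> V [r [hV hr ->]].
by have [] := DF_unit hV (fun i => negbT (gt_eqF (hr i))).
Qed.

Lemma pd_adj (A : M) : posdefmx A -> A^t* = A.
Proof. by case=> /[!hermE] /eqP. Qed.

Lemma sqrt_unique (Z : M) : posdefmx Z -> mxsqrt (Z *m Z) = Z.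
Proof.
case/pd_DF=> V [r [hV hr ->]].
rewrite (DF_mul _ _ hV) (mxsqrt_DF _ hV); apply: DF_ext => i.
by rewrite -expr2 sqrtr_sqr ger0_norm // ltW.
Qed.

Lemma invmx_eq (A B : M) : A *m B = 1%:M -> invmx A = B.
Proof.
move=> h; have [hu _] := mulmx1_unit h.
by rewrite -[RHS](mulKmx hu) h mulmx1.
Qed.

End Aux.

Theorem mainTheorem9 (R : realType) (d : nat) (P Q : 'M[R[i]]_d) (t : R) :
  posdefmx P -> posdefmx Q -> 0 <= t <= 1 ->
  genFidelity (geodesicAI (invmx P) (invmx Q) t) P Q = matsumotoFidelity P Q.
Proof.
move=> hP hQ _.
have [U [p [hU hp eP]]] := pd_DF hP.
have [W [q [hW hq eQ]]] := pd_DF hQ.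
pose s := fun i => Num.sqrt (p i).
have hs : forall i, 0 < s i by move=> i; rewrite sqrtr_gt0.
pose S := DF U s.
have eS : mxsqrt P = S by rewrite eP (mxsqrt_DF _ hU).
have [uS eS'] := DF_unit hU (fun i => negbT (gt_eqF (hs i))).
have {}uS : S \in unitmx := uS.
have hSadj : S^t* = S by rewrite DF_adj.
have hS'adj : (invmx S)^t* = invmx S by rewrite eS' DF_adj.
have uS' : invmx S \in unitmx by rewrite unitmx_inv.
have SS : S *m S = P.
  by rewrite (DF_mul _ _ hU) eP; apply: DF_ext => i /=; rewrite -expr2 sqr_sqrtr // ltW.
have [_ hPinv] := DF_unit hU (fun i => negbT (gt_eqF (hp i))).
have eSi : mxsqrt (invmx P) = invmx S.
  by rewrite eP hPinv (mxsqrt_DF _ hU) eS'; apply: DF_ext => i; rewrite sqrtrV // ltW.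
have eSi2 : mxisqrt (invmx P) = S by rewrite /mxisqrt eSi invmxK.
clearbody S.
have [uQ eQi] := DF_unit hW (fun i => negbT (gt_eqF (hq i))).
rewrite -eQ in uQ eQi.
have pQi : posdefmx (invmx Q).
  by rewrite eQi; apply: DF_pd => // i; rewrite invr_gt0.
have pY : posdefmx (S *m invmx Q *m S) := pd_cong pQi hSadj uS.
have [V [y [hV hy eY]]] := pd_DF pY.
pose Yt := DF V (fun i => y i `^ t).
have hyt : forall i, 0 < y i `^ t by move=> i; apply: powR_gt0.
have eYt : mxpowR (S *m invmx Q *m S) t = Yt by rewrite eY (mxpowR_DF _ _ hV).
have eR : geodesicAI (invmx P) (invmx Q) t = invmx S *m Yt *m invmx S.
  by rewrite /geodesicAI eSi2 eSi eYt.
rewrite /genFidelity /matsumotoFidelity /mxgeomean eR /mxisqrt eS.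
pose Rm := (invmx S) *m Yt *m (invmx S).
have pRm : posdefmx Rm.
  apply: pd_cong hS'adj uS'; exact: DF_pd.
have [X [rr [hX hrr eRm]]] := pd_DF pRm.
pose T := mxsqrt Rm.
have eT : T = DF X (fun i => Num.sqrt (rr i)) by rewrite /T eRm (mxsqrt_DF _ hX).
have pT : posdefmx T by rewrite eT; apply: DF_pd => // i; rewrite sqrtr_gt0.
have hTadj : T^t* = T := pd_adj pT.
have uT : T \in unitmx := pd_unit pT.
have TT : T *m T = Rm.
  by rewrite eT (DF_mul _ _ hX) eRm; apply: DF_ext => i /=; rewrite -expr2 sqr_sqrtr // ltW.
pose K := DF V (fun i => (Num.sqrt (y i `^ t))^-1).
pose L := DF V (fun i => (Num.sqrt (y i * y i `^ t))^-1).
have pK : posdefmx K by apply: DF_pd => // i; rewrite invr_gt0 sqrtr_gt0.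
have pL : posdefmx L by apply: DF_pd => // i; rewrite invr_gt0 sqrtr_gt0 mulr_gt0.
pose G := S *m K *m S.
pose H := S *m L *m S.
have pG : posdefmx G := pd_cong pK hSadj uS.
have pH : posdefmx H := pd_cong pL hSadj uS.
have KYK : K *m Yt *m K = 1%:M.
  rewrite /K /Yt !(DF_mul _ _ hV) -(DF_one hV); apply: DF_ext => i /=.
  have ha := hyt i; have hb : Num.sqrt (y i `^ t) != 0 by rewrite gt_eqF // sqrtr_gt0.
  rewrite -{2}(sqr_sqrtr (ltW ha)); field; exact: hb.
have eYi : (invmx S) *m Q *m (invmx S) = DF V (fun i => (y i)^-1).
  have [_ <-] := DF_unit hV (fun i => negbT (gt_eqF (hy i))).
  rewrite -eY; apply/esym/invmx_eq.
  by rewrite !mulmxA (mulmxK uS) (mulmxKV uQ) mulmxV.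
have LYL : L *m Yt *m L = DF V (fun i => (y i)^-1).
  rewrite /L /Yt !(DF_mul _ _ hV); apply: DF_ext => i /=.
  have ha := hyt i; have hy' := hy i.
  rewrite sqrtrM ?(ltW hy') //.
  have ea := sqr_sqrtr (ltW ha); have eb := sqr_sqrtr (ltW hy').
  have hc : Num.sqrt (y i) != 0 by rewrite gt_eqF // sqrtr_gt0.
  have hd : Num.sqrt (y i `^ t) != 0 by rewrite gt_eqF // sqrtr_gt0.
  move: ea eb hc hd; move: (Num.sqrt (y i)) (Num.sqrt (y i `^ t)) => b a.
  move=> <- <- hb ha'; field; by rewrite hb ha'.
have LYK : L *m Yt *m K = DF V (fun i => Num.sqrt ((y i)^-1)).
  rewrite /L /Yt /K !(DF_mul _ _ hV); apply: DF_ext => i /=.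
  have ha := hyt i; have hy' := hy i.
  rewrite sqrtrM ?(ltW hy') // sqrtrV ?(ltW hy') //.
  have ea := sqr_sqrtr (ltW ha).
  have hc : Num.sqrt (y i) != 0 by rewrite gt_eqF // sqrtr_gt0.
  have hd : Num.sqrt (y i `^ t) != 0 by rewrite gt_eqF // sqrtr_gt0.
  move: ea hc hd; move: (Num.sqrt (y i)) (Num.sqrt (y i `^ t)) => b a.
  move=> <- hb ha'; field; by rewrite hb ha'.
rewrite -/Rm -/T.
have eRm0 : Rm = invmx S *m Yt *m invmx S by [].
clearbody T Rm Yt K L.
have GRG : (S *m K *m S) *m Rm *m (S *m K *m S) = P.
  rewrite eRm0 !mulmxA (mulmxK uS) (mulmxKV uS).
  have -> : S *m K *m Yt *m K *m S = S *m (K *m Yt *m K) *m S by rewrite !mulmxA.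
  by rewrite KYK mulmx1 SS.
have HRH : (S *m L *m S) *m Rm *m (S *m L *m S) = Q.
  rewrite eRm0 !mulmxA (mulmxK uS) (mulmxKV uS).
  have -> : S *m L *m Yt *m L *m S = S *m (L *m Yt *m L) *m S by rewrite !mulmxA.
  by rewrite LYL -eYi !mulmxA (mulmxV uS) mul1mx (mulmxKV uS).
have Z1 : mxsqrt (T *m P *m T) = T *m (S *m K *m S) *m T.
  rewrite -GRG -TT.
  have -> : T *m (S *m K *m S *m (T *m T) *m (S *m K *m S)) *m T =
    (T *m (S *m K *m S) *m T) *m (T *m (S *m K *m S) *m T) by rewrite !mulmxA.
  exact: sqrt_unique (pd_cong pG hTadj uT).
have Z2 : mxsqrt (T *m Q *m T) = T *m (S *m L *m S) *m T.
  rewrite -HRH -TT.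
  have -> : T *m (S *m L *m S *m (T *m T) *m (S *m L *m S)) *m T =
    (T *m (S *m L *m S) *m T) *m (T *m (S *m L *m S) *m T) by rewrite !mulmxA.
  exact: sqrt_unique (pd_cong pH hTadj uT).
have iR : invmx Rm = invmx T *m invmx T.
  by apply: invmx_eq; rewrite -TT !mulmxA (mulmxK uT) (mulmxV uT).
rewrite Z1 Z2 iR eYi (mxsqrt_DF _ hV).
rewrite !mulmxA (mulmxK uT) (mulmxKV uT).
have -> : T *m S *m K *m S *m S *m L *m S *m T = T *m (S *m K *m S *m S *m L *m S *m T)
  by rewrite !mulmxA.
rewrite [LHS]mxtrace_mulC.
have -> : S *m K *m S *m S *m L *m S *m T *m T =
  S *m K *m S *m S *m L *m S *m (T *m T) by rewrite !mulmxA.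
rewrite TT eRm0 !mulmxA (mulmxK uS).
have -> : S *m K *m S *m S *m L *m Yt *m invmx S =
    S *m (K *m S *m S *m L *m Yt) *m invmx S by rewrite !mulmxA.
have trS : forall Y : 'M_d, \tr (S *m Y *m invmx S) = \tr Y.
  by move=> Y; rewrite mxtrace_mulC mulmxA (mulVmx uS) mul1mx.
rewrite trS.
have -> : K *m S *m S *m L *m Yt = (K *m S) *m (S *m L *m Yt) by rewrite !mulmxA.
rewrite [LHS]mxtrace_mulC.
have -> : S *m L *m Yt *m (K *m S) = S *m (L *m Yt *m K) *m S by rewrite !mulmxA.
by rewrite LYK /DF !mulmxA.
Qed.
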